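(* For every $\varepsilon>0$ there exists $C_\varepsilon>0$ such that for every integer $N\ge1$, \[ \max_{\alpha\in\mathcal O_N}\ \sum_{\beta\in\mathcal O_N}\sqrt{\Gamma_{\alpha\beta}}\le C_\varepsilon N^{4+\varepsilon}. \]
   Context: For an integer $N\ge1$, $\Lambda_N:=\{k\in\mathbb Z^3\setminus\{0\}:|k|_\infty\le N\}$. The full octahedral group $O_h$ is the group of the 48 signed coordinate permutations of $\mathbb Z^3$; it acts on $\Lambda_N$ and $\mathcal O_N:=\Lambda_N/O_h$ is the set of orbits. For $\alpha,\beta\in\mathcal O_N$, $\Gamma_{\alpha\beta}:=\#\{(k,p,q):k\in\alpha,\ p\in\beta,\ q=k-p\in\Lambda_N\}$. *)

(* Defs.v *)
From HB Require Import structures.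
From mathcomp Require Import all_boot all_order all_algebra all_fingroup.
From mathcomp Require Import all_classical all_reals all_analysis.
Set Implicit Arguments. Unset Strict Implicit. Unset Printing Implicit Defensive.
Import Order.TTheory GRing.Theory Num.Theory.
Local Open Scope ring_scope.

Definition pt3 := (int * int * int)%type.

Definition coord (k : pt3) (i : 'I_3) : int :=
  if val i == 0%N then k.1.1 else if val i == 1%N then k.1.2 else k.2.

Definition mk3 (f : 'I_3 -> int) : pt3 := (f (inord 0), f (inord 1), f (inord 2)).

Definition sub3 (k p : pt3) : pt3 := (k.1.1 - p.1.1, k.1.2 - p.1.2, k.2 - p.2).

Definition inLambda (N : nat) (k : pt3) : bool :=
  (k != (0, 0, 0)) && [forall i : 'I_3, `|coord k i| <= N%:Z].

Definition rng (N : nat) : seq int := [seq i%:Z - N%:Z | i <- iota 0 (N + N).+1].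
Definition LambdaN (N : nat) : seq pt3 :=
  [seq k <- [seq (xy, z) | xy <- [seq (x, y) | x <- rng N, y <- rng N], z <- rng N] | inLambda N k].

Definition pt (N : nat) := seq_sub (LambdaN N).

(* O_h: the 48 signed coordinate permutations, (s, e) acts by
   (g k)_i = (-1)^(e i) * k_(s i) *)
Definition Oh := ({perm 'I_3} * {ffun 'I_3 -> bool})%type.
Definition act (g : Oh) (k : pt3) : pt3 :=
  mk3 (fun i => (-1) ^+ (g.2 i) * coord k (g.1 i)).

Definition orbit3 (N : nat) (k : pt N) : {set pt N} :=
  [set p : pt N | [exists g : Oh, act g (val k) == val p]].
Definition ON (N : nat) : {set {set pt N}} := [set orbit3 k | k : pt N].

(* Gamma_{alpha beta} = #{(k,p,q) : k in alpha, p in beta, q = k - p in Lambda_N};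
   q is determined by (k,p), so we count pairs (k,p). *)
Definition Gamma (N : nat) (alpha beta : {set pt N}) : nat :=
  #|[set kp : pt N * pt N |
      [&& kp.1 \in alpha, kp.2 \in beta & inLambda N (sub3 (val kp.1) (val kp.2))]]|.

(* Main.v *)
Require Import Defs.
From HB Require Import structures.
From mathcomp Require Import all_boot all_order all_algebra all_fingroup.
From mathcomp Require Import all_classical all_reals all_analysis.
From mathcomp Require Import zify lra.
Import Order.TTheory GRing.Theory Num.Theory.
Local Open Scope ring_scope.

Lemma card_Oh : #|{: Oh}| = 48%N.
Proof. by rewrite card_prod card_Sn card_ffun !card_ord card_bool. Qed.

Lemma card_orbit3 N (k : pt N) : (#|orbit3 k| <= 48)%N.
Proof.
rewrite -card_Oh.
pose f := fun g : Oh => odflt k (insub (Defs.act g (val k)) : option (pt N)).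
rewrite -cardsT; apply: leq_trans _ (leq_imset_card f [set: Oh]).
apply: subset_leq_card; apply/fintype.subsetP => p.
rewrite inE => /existsP [g /eqP Hg].
apply/imsetP; exists g; first by rewrite inE.
by rewrite /f Hg valK.
Qed.

Lemma card_ON_el N (a : {set pt N}) : a \in ON N -> (#|a| <= 48)%N.
Proof. by move=> /imsetP [k _ ->]; apply: card_orbit3. Qed.

Lemma Gamma_le N (a b : {set pt N}) : a \in ON N -> b \in ON N ->
  (Gamma a b <= 48 * 48)%N.
Proof.
move=> Ha Hb; rewrite /Gamma.
apply: (@leq_trans #|finset.setX a b|).
  apply: subset_leq_card; apply/fintype.subsetP => -[x y].
  by rewrite !inE /= => /and3P [-> -> _].
by rewrite cardsX leq_mul // card_ON_el.
Qed.

Lemma card_pt N : (#|{: pt N}| <= (N + N).+1 ^ 3)%N.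
Proof.
rewrite cardE -(size_map val).
apply: (@leq_trans (size (LambdaN N))).
  apply: uniq_leq_size.
    by rewrite (map_inj_uniq val_inj) enum_uniq.
  by move=> x /mapP [y _ ->]; apply: valP.
rewrite /LambdaN size_filter (leq_trans (count_size _ _)) //.
rewrite !size_allpairs /rng size_map size_iota.
by rewrite -[3%N]/(1+1+1)%N !expnD !expn1.
Qed.

Lemma card_ON N : (#|ON N| <= (N + N).+1 ^ 3)%N.
Proof. exact: leq_trans (leq_imset_card _ _) (card_pt N). Qed.

Theorem proposition4p8 (R : realType) :
  forall eps : R, 0 < eps ->
  exists C : R, 0 < C /\
    forall N : nat, (1 <= N)%N ->
    forall alpha : {set pt N}, alpha \in ON N ->
      \sum_(beta in ON N) Num.sqrt ((Gamma alpha beta)%:R : R)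
        <= C * (N%:R `^ (4 + eps)).
Proof.
move=> eps eps0; exists ((27 * 48)%N%:R); split; first by rewrite ltr0n.
move=> N N1 alpha Ha.
have H1 : \sum_(beta in ON N) Num.sqrt ((Gamma alpha beta)%:R : R)
          <= \sum_(beta in ON N) (48%:R : R).
  apply: ler_sum => b Hb.
  have -> : (48%:R : R) = Num.sqrt ((48 * 48)%N%:R).
    by rewrite natrM -expr2 sqrtr_sqr ger0_norm // ler0n.
  by rewrite ler_sqrt ?ler0n // ler_nat Gamma_le.
apply: (le_trans H1); rewrite sumr_const.
have -> : (48%:R : R) *+ #|ON N| = #|ON N|%:R * 48%:R by rewrite mulr_natl.
have H2 : (#|ON N| <= 27 * N ^ 3)%N.
  apply: (leq_trans (card_ON N)).
  have h : ((N + N).+1 <= 3 * N)%N by lia.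
  apply: (@leq_trans ((3 * N) ^ 3)); first by rewrite leq_exp2r.
  by rewrite expnMn.
have HN : (1 : R) <= N%:R by rewrite ler1n.
have H4 : (N%:R ^+ 3 : R) <= N%:R `^ (4 + eps).
  rewrite -powR_mulrn ?(le_trans ler01 HN) //.
  apply: ler_powR => //.
  lra.
apply: (@le_trans _ _ ((27 * N ^ 3)%N%:R * 48%:R)).
  by rewrite ler_pM2r ?ltr0n // ler_nat.
have -> : ((27 * N ^ 3)%N%:R * 48%:R : R) = (27 * 48)%N%:R * N%:R ^+ 3.
  by rewrite natrM natrX natrM mulrAC.
rewrite ler_pM2l; first exact: H4.
by rewrite ltr0n muln_gt0.
Qed.
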